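(* Let $n\ge1$, $m\ge2$, $k\ge1$, and ${\bf u}_1,\ldots,{\bf u}_k\in\mathbb{R}^n$. For each $i$ let ${\bf U}_i({\bf x})$ be a symmetric $m\times m$ matrix whose entries are affine-linear forms in ${\bf x}=(x_1,\ldots,x_n)$, which has rank $2$ and whose two nonzero eigenvalues are $\pm\|{\bf u}_i-{\bf x}\|$. Then the polynomial $p^n_k({\bf x})=\prod_{\sigma\in\{0,1\}^k}\bigl(d-\sum_{i}(-1)^{\sigma_i}\|{\bf u}_i-{\bf x}\|\bigr)$ divides $$\det\bigl(d\cdot I_{m^k}+{\bf U}_1({\bf x})\oplus{\bf U}_2({\bf x})\oplus\cdots\oplus{\bf U}_k({\bf x})\bigr)$$ in the polynomial ring $\mathbb{R}[d,x_1,\ldots,x_n]$. In particular this holds for $m=n+1$ and ${\bf U}_i({\bf x})$ the matrix whose first row is $(0,x_1-u_{i1},\ldots,x_n-u_{in})$, whose first column is its transpose, and whose other entries are $0$.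
   Context: The tensor sum of an $m\times m$ matrix $A$ and an $n\times n$ matrix $B$ is $A\oplus B:=A\otimes I_n+I_m\otimes B$ (associative). *)

(* Defs.v *)
From HB Require Import structures.
From mathcomp Require Import all_boot all_order all_algebra.
From mathcomp Require Import mxtens mpoly.
Set Implicit Arguments. Unset Strict Implicit. Unset Printing Implicit Defensive.
Import Order.TTheory GRing.Theory Num.Theory.
Local Open Scope ring_scope.

Section Defs.
Variable R : rcfType.

Definition edist n (u x : 'rV[R]_n) : R :=
  Num.sqrt (\sum_(j < n) (u 0 j - x 0 j) ^+ 2).

Definition tenssum p q (A : 'M[R]_p) (B : 'M[R]_q) : 'M[R]_(p * q) :=
  A *t (1%:M : 'M[R]_q) + (1%:M : 'M[R]_p) *t B.

(* U_1 (+) (U_2 (+) ( ... (+) U_k)), of size m^k; the empty tensor sum is the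
   1x1 zero matrix, the neutral element of (+). *)
Fixpoint tsum m k : ('I_k -> 'M[R]_m) -> 'M[R]_(m ^ k) :=
  match k return ('I_k -> 'M[R]_m) -> 'M[R]_(m ^ k) with
  | 0 => fun _ => castmx (esym (expn0 m), esym (expn0 m)) (0 : 'M[R]_1)
  | k'.+1 => fun U =>
      castmx (esym (expnS m k'), esym (expnS m k'))
        (tenssum (U ord0) (@tsum m k' (fun i => U (lift ord0 i))))
  end.

Definition pnk n k (u : 'I_k -> 'rV[R]_n) (d : R) (x : 'rV[R]_n) : R :=
  \prod_(s : {ffun 'I_k -> bool})
     (d - \sum_(i < k) (-1) ^+ (s i) * edist (u i) x).

(* evaluation point (d, x_1, ..., x_n) for polynomials in R[d, x_1..x_n];
   variable 0 is d, variable j.+1 is x_{j+1}. *)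
Definition dx_pt n (d : R) (x : 'rV[R]_n) : 'I_n.+1 -> R :=
  fun j => match unlift ord0 j with None => d | Some j' => x 0 j' end.

(* "p^n_k divides det(d I + U_1(x) (+) ... (+) U_k(x)) in R[d, x_1..x_n]":
   p^n_k is (given by) a polynomial P, and the determinant is (given by)
   P * Q for some polynomial Q. *)
Definition pnk_divides_det n m k (u : 'I_k -> 'rV[R]_n)
    (U : 'I_k -> 'rV[R]_n -> 'M[R]_m) : Prop :=
  exists P Q : {mpoly R[n.+1]},
    (forall d x, P.@[dx_pt d x] = pnk u d x) /\
    (forall d x, (P * Q).@[dx_pt d x]
                 = \det (d%:M + tsum (fun i => U i x))).

Definition affmx n m (U0 : 'M[R]_m) (C : 'I_n -> 'M[R]_m) (x : 'rV[R]_n)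
  : 'M[R]_m := U0 + \sum_(j < n) x 0 j *: C j.

Definition arrowmx n (u x : 'rV[R]_n) : 'M[R]_n.+1 :=
  \matrix_(a, b) match unlift ord0 a, unlift ord0 b with
                 | None, Some j => x 0 j - u 0 j
                 | Some j, None => x 0 j - u 0 j
                 | _, _ => 0
                 end.
End Defs.

(* Main.v *)
Require Import Defs.
From HB Require Import structures.
From mathcomp Require Import all_boot all_order all_algebra.
From mathcomp Require Import mxtens mpoly.
From mathcomp Require Import ring lra zify.
Import Order.TTheory GRing.Theory Num.Theory.
Set Implicit Arguments. Unset Strict Implicit. Unset Printing Implicit Defensive.
Local Open Scope ring_scope.

Section TrigSim.
Variable F : fieldType.

Lemma char_poly_sim N (A P Pi : 'M[F]_N) : Pi *m P = 1%:M ->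
  char_poly (P *m A *m Pi) = char_poly A.
Proof.
move=> PiP; have PPi := mulmx1C PiP.
rewrite /char_poly.
have -> : char_poly_mx (P *m A *m Pi) =
   map_mx polyC P *m char_poly_mx A *m map_mx polyC Pi.
  rewrite /char_poly_mx mulmxBr mulmxBl -!map_mxM.
  congr (_ - _).
  by rewrite mul_mx_scalar -scalemxAl -map_mxM PPi map_mx1 scalemx1.
by rewrite !det_mulmx mulrAC -det_mulmx -map_mxM PPi map_mx1 det1 mul1r.
Qed.
End TrigSim.
Section Trig.
Variable R : rcfType.

Lemma tens11 p q : (1%:M : 'M[R]_p) *t (1%:M : 'M[R]_q) = 1%:M.
Proof.
apply/matrixP=> i j.
case: (mxtens_indexP i)=> i1 i2; case: (mxtens_indexP j)=> j1 j2.
rewrite tensmxE !mxE -natrM; congr (_%:R).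
rewrite (inj_eq (can_inj (@mxtens_indexK _ _))) xpair_eqE.
by case: (i1 == j1); case: (i2 == j2).
Qed.

Definition trig_sim N (A : 'M[R]_N) (f : 'I_N -> R) :=
  exists P Pi : 'M[R]_N, Pi *m P = 1%:M /\ is_trig_mx (P *m A *m Pi)
    /\ forall i, (P *m A *m Pi) i i = f i.

Lemma trig_char N (A : 'M[R]_N) f : trig_sim A f ->
  char_poly (- A) = \prod_(i < N) ('X + (f i)%:P).
Proof.
case=> P [Pi [PiP [tr dg]]].
rewrite -(char_poly_sim (-A) PiP) mulmxN mulNmx char_poly_trig.
  by apply: eq_bigr => i _; rewrite mxE dg polyCN opprK.
by apply/is_trig_mxP => i j lij; rewrite mxE (is_trig_mxP tr) // oppr0.
Qed.

Lemma mxtens_index_lt p q (i1 j1 : 'I_p) (i2 j2 : 'I_q) :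
  (mxtens_index (i1, i2) < mxtens_index (j1, j2))%N ->
  (i1 < j1)%N \/ (i1 = j1 /\ (i2 < j2)%N).
Proof.
rewrite /= => H.
have hi2 := ltn_ord i2; have hj2 := ltn_ord j2.
case: (ltngtP i1 j1) => h; first by left.
  exfalso. have : (j1.+1 * q <= i1 * q)%N by rewrite leq_mul2r h orbT.
  rewrite mulSn.
  lia.
by right; split; [exact: val_inj | lia].
Qed.

Lemma trig_tens p q (A : 'M[R]_p) (B : 'M[R]_q) f g :
  trig_sim A f -> trig_sim B g ->
  trig_sim (tenssum A B)
    (fun j => f (mxtens_unindex j).1 + g (mxtens_unindex j).2).
Proof.
case=> P [Pi [PiP [trA dgA]]]; case=> Q [Qi [QiQ [trB dgB]]].
have PPi := mulmx1C PiP; have QQi := mulmx1C QiQ.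
exists (P *t Q), (Pi *t Qi).
have E : (P *t Q) *m tenssum A B *m (Pi *t Qi) =
   (P *m A *m Pi) *t 1%:M + 1%:M *t (Q *m B *m Qi).
  by rewrite /tenssum mulmxDr mulmxDl !tensmx_mul !mulmx1 PPi QQi.
rewrite E; split; first by rewrite tensmx_mul PiP QiQ tens11.
set T := P *m A *m Pi in trA dgA *; set S := Q *m B *m Qi in trB dgB *.
clearbody T S.
split.
  apply/is_trig_mxP => i j.
  case: (mxtens_indexP i)=> i1 i2; case: (mxtens_indexP j)=> j1 j2.
  move=> /mxtens_index_lt [h|[e h]].
    rewrite !mxE !mxtens_indexK /= (is_trig_mxP trA) // mul0r add0r.
    by rewrite -val_eqE /= (ltn_eqF h) mul0r.
  rewrite !mxE !mxtens_indexK /= (is_trig_mxP trB) // mulr0 addr0.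
  by rewrite -val_eqE /= (ltn_eqF h) mulr0.
move=> i; case: (mxtens_indexP i)=> i1 i2.
by rewrite !mxE !mxtens_indexK /= !eqxx mulr1 mul1r dgA dgB.
Qed.

Lemma trig_sim_ext N (A : 'M[R]_N) f g : f =1 g -> trig_sim A f -> trig_sim A g.
Proof.
move=> fg [P [Pi [h1 [h2 h3]]]]; exists P, Pi; do 2!split => //.
by move=> i; rewrite h3 fg.
Qed.

Lemma trig_cast a b (e : a = b) (A : 'M[R]_a) f : trig_sim A f ->
  trig_sim (castmx (e, e) A) (fun j => f (cast_ord (esym e) j)).
Proof.
case: b / e; rewrite castmx_id; apply: trig_sim_ext => j.
by rewrite cast_ord_id.
Qed.

Lemma big_cast a b (e : a = b) (G : 'I_b -> {poly R}) :
  \prod_(j < b) G j = \prod_(j < a) G (cast_ord e j).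
Proof. by case: b / e G => G; apply: eq_bigr => j _; rewrite cast_ord_id. Qed.

Lemma big_tens p q (G : 'I_(p * q) -> {poly R}) :
  \prod_(j < p * q) G j = \prod_(a < p) \prod_(b < q) G (mxtens_index (a, b)).
Proof.
rewrite pair_big /=.
rewrite (reindex (@mxtens_index p q)) /=; last first.
  by exists (@mxtens_unindex p q) => x _; [apply: mxtens_indexK | apply: mxtens_unindexK].
by apply: eq_bigr => -[a b].
Qed.

Definition consf m k (a : 'I_m) (t : {ffun 'I_k -> 'I_m}) : {ffun 'I_k.+1 -> 'I_m} :=
  [ffun i => if unlift ord0 i is Some i' then t i' else a].

Lemma big_ffunS m k (G : {ffun 'I_k.+1 -> 'I_m} -> {poly R}) :
  \prod_(t : {ffun 'I_k.+1 -> 'I_m}) G t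
  = \prod_(a < m) \prod_(t : {ffun 'I_k -> 'I_m}) G (consf a t).
Proof.
rewrite pair_big /=.
rewrite (reindex (fun p : 'I_m * {ffun 'I_k -> 'I_m} => consf p.1 p.2)) /=; last first.
  exists (fun t : {ffun 'I_k.+1 -> 'I_m} => (t ord0, [ffun i => t (lift ord0 i)])).
    move=> [a t] _ /=; rewrite /consf ffunE unlift_none; congr (_, _).
    by apply/ffunP => i; rewrite !ffunE liftK.
  move=> t _ /=; apply/ffunP => i; rewrite /consf ffunE.
  by case: unliftP => [j ->|->]; rewrite ?ffunE.
by apply: eq_bigr => -[a t].
Qed.

Lemma trig_tsum m k (A : 'I_k -> 'M[R]_m) (f : 'I_k -> 'I_m -> R) :
  (forall i, trig_sim (A i) (f i)) ->
  exists lam : 'I_(m ^ k) -> R, trig_sim (tsum A) lam /\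
   (forall G : R -> {poly R}, \prod_(j < m ^ k) G (lam j)
     = \prod_(t : {ffun 'I_k -> 'I_m}) G (\sum_(i < k) f i (t i))).
Proof.
elim: k A f => [|k IH] A f hA.
  exists (fun _ => 0); split.
    rewrite /=. apply: (trig_cast (esym (expn0 m)) (f:=fun _ => 0)).
    exists 1%:M, 1%:M; rewrite mul1mx mulmx1 mulmx0; split => //; split.
      exact: mx0_is_trig.
    by move=> i; rewrite mxE.
  move=> G; rewrite big_const_ord expn0 /= mulr1.
  rewrite (eq_bigr (fun _ => G 0)) => [|t _]; last by rewrite big_ord0.
  by rewrite big_const card_ffun !card_ord expn0 /= mulr1.
have [lam' [Hl' Hp']] := IH (fun i => A (lift ord0 i)) (fun i => f (lift ord0 i))
   (fun i => hA (lift ord0 i)).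
have := trig_cast (esym (expnS m k)) (trig_tens (hA ord0) Hl').
move=> Hl; eexists; split; first exact: Hl.
move=> G; rewrite (big_cast (esym (expnS m k))).
under eq_bigr do rewrite cast_ordK.
rewrite big_tens big_ffunS; apply: eq_bigr => a _.
under eq_bigr do rewrite mxtens_indexK /=.
rewrite (Hp' (fun v => G (f ord0 a + v))); apply: eq_bigr => t _.
rewrite big_ord_recl /consf ffunE unlift_none; congr (G (_ + _)).
by apply: eq_bigr => i _; rewrite ffunE liftK.
Qed.
End Trig.

Section C.
Variable R : rcfType.

Lemma dvdp_prod_inj (S T : finType) (h : S -> T) (F : T -> {poly R}) :
  injective h -> \prod_s F (h s) %| \prod_t F t.
Proof.
move=> hinj.
rewrite (bigID (fun t => t \in [set h x | x in S])) /=.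
rewrite big_imset /=; last by move=> x y _ _; apply: hinj.
exact: dvdp_mulr.
Qed.

Definition pnkp k (r : 'I_k -> R) : {poly R} :=
  \prod_(s : {ffun 'I_k -> bool}) ('X - (\sum_(i < k) (-1) ^+ s i * r i)%:P).

Lemma sum_sign k (r : 'I_k -> R) (s : {ffun 'I_k -> bool}) (g : 'I_k -> R) :
  (forall i, g i = if s i then r i else - r i) ->
  'X + (\sum_(i < k) g i)%:P = 'X - (\sum_(i < k) (-1) ^+ s i * r i)%:P.
Proof.
move=> hg; rewrite -polyCN -sumrN; congr ('X + (_)%:P); apply: eq_bigr => i _.
by rewrite hg; case: (s i); rewrite ?expr1 ?expr0 ?mulN1r ?mul1r ?opprK.
Qed.

Lemma U_side m k (f : 'I_k -> 'I_m -> R) (r : 'I_k -> R) (a b : 'I_k -> 'I_m) :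
  (forall i, a i != b i) -> (forall i, f i (a i) = - r i) ->
  (forall i, f i (b i) = r i) ->
  pnkp r %| \prod_(t : {ffun 'I_k -> 'I_m}) ('X + (\sum_(i < k) f i (t i))%:P).
Proof.
move=> ab fa fb.
pose h (s : {ffun 'I_k -> bool}) : {ffun 'I_k -> 'I_m} := [ffun i => if s i then b i else a i].
have hinj : injective h.
  move=> s1 s2 e; apply/ffunP => i; have := congr1 (fun t : {ffun 'I_k -> 'I_m} => t i) e.
  rewrite /h !ffunE.
  by case: (s1 i); case: (s2 i) => // E; move: (ab i); rewrite E eqxx.
have := dvdp_prod_inj (fun t : {ffun 'I_k -> 'I_m} => 'X + (\sum_(i < k) f i (t i))%:P) hinj.
rewrite /pnkp; congr (_ %| _); apply: eq_bigr => s _.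
by apply: sum_sign => i; rewrite /h ffunE; case: (s i).
Qed.

Lemma W_side k (r : 'I_k -> R) :
  \prod_(t : {ffun 'I_k -> 'I_2})
     ('X + (\sum_(i < k) (if t i == ord0 then - r i else r i))%:P) = pnkp r.
Proof.
pose h (s : {ffun 'I_k -> bool}) : {ffun 'I_k -> 'I_2} :=
  [ffun i => if s i then ord_max else ord0].
rewrite (reindex h) /=; last first.
  exists (fun t : {ffun 'I_k -> 'I_2} => [ffun i => t i != ord0]).
    by move=> s _; apply/ffunP => i; rewrite !ffunE; case: (s i).
  move=> t _; apply/ffunP => i; rewrite !ffunE.
  by case: (t i) => -[|[|]] //= p; apply: val_inj.
apply: eq_bigr => s _; apply: sum_sign => i; rewrite /h ffunE.
by case: (s i).
Qed.
End C.


Definition mx2 (T : pzRingType) (a b c d : T) : 'M[T]_2 :=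
  \matrix_(i, j) if i == ord0 then (if j == ord0 then a else b)
                 else (if j == ord0 then c else d).

Lemma ord2P (i : 'I_2) : i = ord0 \/ i = ord_max.
Proof. by case: i => -[|[|//]] p; [left|right]; apply: val_inj. Qed.

Lemma mx2_mul (T : comPzRingType) (a b c d a' b' c' d' : T) :
  mx2 a b c d *m mx2 a' b' c' d' =
  mx2 (a*a' + b*c') (a*b' + b*d') (c*a' + d*c') (c*b' + d*d').
Proof.
apply/matrixP => i j; rewrite !mxE !big_ord_recl big_ord0 !mxE /=.
by case: (ord2P i) => ->; case: (ord2P j) => -> /=; rewrite addr0.
Qed.

Lemma mx2_1 (T : pzRingType) : mx2 (1 : T) 0 0 1 = 1%:M.
Proof.
apply/matrixP => i j; rewrite !mxE.
by case: (ord2P i) => ->; case: (ord2P j) => -> /=.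
Qed.

Lemma map_mx2 (aT rT : pzRingType) (f : {rmorphism aT -> rT}) (a b c d : aT) :
  map_mx f (mx2 a b c d) = mx2 (f a) (f b) (f c) (f d).
Proof.
apply/matrixP => i j; rewrite !mxE.
by case: (ord2P i) => ->; case: (ord2P j) => -> /=.
Qed.

Section D.
Variable R : rcfType.

Lemma W_trig (r : R) :
  trig_sim (mx2 0 (r ^+ 2) 1 0) (fun a => if a == ord0 then - r else r).
Proof.
exists (mx2 1 (-r) 0 1), (mx2 1 r 0 1).
rewrite !mx2_mul; split.
  rewrite -mx2_1; congr mx2; ring.
have -> : mx2 ((1 * 0 + - r * 1) * 1 + (1 * r ^+ 2 + - r * 0) * 0)
   ((1 * 0 + - r * 1) * r + (1 * r ^+ 2 + - r * 0) * 1)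
   ((0 * 0 + 1 * 1) * 1 + (0 * r ^+ 2 + 1 * 0) * 0)
   ((0 * 0 + 1 * 1) * r + (0 * r ^+ 2 + 1 * 0) * 1) = mx2 (- r) 0 1 r.
  congr mx2; ring.
split.
  apply/is_trig_mxP => i j; rewrite !mxE.
  by case: (ord2P i) => ->; case: (ord2P j) => -> /=.
by move=> i; rewrite !mxE; case: (ord2P i) => ->.
Qed.
End D.

Definition gtenssum (T : pzRingType) p q (A : 'M[T]_p) (B : 'M[T]_q)
  : 'M[T]_(p * q) := A *t (1%:M : 'M[T]_q) + (1%:M : 'M[T]_p) *t B.

Fixpoint gtsum (T : pzRingType) m k : ('I_k -> 'M[T]_m) -> 'M[T]_(m ^ k) :=
  match k return ('I_k -> 'M[T]_m) -> 'M[T]_(m ^ k) with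
  | 0 => fun _ => castmx (esym (expn0 m), esym (expn0 m)) (0 : 'M[T]_1)
  | k'.+1 => fun U =>
      castmx (esym (expnS m k'), esym (expnS m k'))
        (gtenssum (U ord0) (@gtsum T m k' (fun i => U (lift ord0 i))))
  end.

Lemma gtsumE (R : rcfType) m k (A : 'I_k -> 'M[R]_m) : gtsum A = tsum A.
Proof. by elim: k A => [|k IH] A //=; rewrite IH. Qed.

Lemma gtsum_ext (T : pzRingType) m k (A B : 'I_k -> 'M[T]_m) :
  A =1 B -> gtsum A = gtsum B.
Proof.
elim: k A B => [|k IH] A B AB //=.
by rewrite AB (IH (fun i => A (lift ord0 i)) (fun i => B (lift ord0 i))).
Qed.

Lemma map_gtsum (aT rT : pzRingType) (f : {rmorphism aT -> rT}) m k
   (A : 'I_k -> 'M[aT]_m) :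
  map_mx f (gtsum A) = gtsum (fun i => map_mx f (A i)).
Proof.
elim: k A => [|k IH] A /=; first by rewrite map_castmx map_mx0.
by rewrite map_castmx /gtenssum map_mxD !map_mxT !map_mx1 IH.
Qed.

Section E.
Variable R : rcfType.

Lemma char_poly_eval N (B : 'M[R]_N) d : (char_poly B).[d] = \det (d%:M - B).
Proof.
rewrite -horner_evalE /char_poly -det_map_mx; congr (\det _).
apply/matrixP => i j; rewrite !mxE /=.
by rewrite horner_evalE hornerD hornerN hornerC hornerMn hornerX.
Qed.

Definition mpoly_of n (p : {poly {mpoly R[n]}}) : {mpoly R[n.+1]} :=
  \sum_(i < size p)
     (p`_i \mPo [tuple 'X_(lift ord0 j) | j < n]) * 'X_ord0 ^+ i.

Lemma size_map_le (aT rT : nzRingType) (f : {rmorphism aT -> rT}) (p : {poly aT}) :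
  (size (map_poly f p) <= size p)%N.
Proof. apply/leq_sizeP => j hj; by rewrite coef_map (nth_default 0 hj) raddf0.
Qed.

Lemma mpoly_ofE n (p : {poly {mpoly R[n]}}) d (x : 'rV[R]_n) :
  (mpoly_of p).@[dx_pt d x] = (map_poly (meval (fun j => x 0 j)) p).[d].
Proof.
rewrite (horner_coef_wide _ (size_map_le _ p)) /mpoly_of rmorph_sum /=.
apply: eq_bigr => i _; rewrite mevalM rmorphXn /= mevalXU coef_map /=.
rewrite comp_mpoly_meval; congr (_ * _ ^+ _); last first.
  by rewrite /dx_pt unlift_none.
apply: meval_eq => j; rewrite tnth_mktuple mevalXU /dx_pt liftK.
by [].
Qed.
End E.

Import Pdiv.CommonRing.
Section Core.
Variable R : rcfType.

Lemma pnkpE n k (u : 'I_k -> 'rV[R]_n) d x :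
  (pnkp (fun i => edist (u i) x)).[d] = pnk u d x.
Proof.
rewrite /pnkp /pnk horner_prod; apply: eq_bigr => s _.
by rewrite hornerD hornerN hornerC hornerX.
Qed.

Lemma core n m k (u : 'I_k -> 'rV[R]_n) (U0 : 'I_k -> 'M[R]_m)
  (C : 'I_k -> 'I_n -> 'M[R]_m) :
  (forall x i, exists f : 'I_m -> R, trig_sim (affmx (U0 i) (C i) x) f /\
     exists a b, [/\ a != b, f a = - edist (u i) x & f b = edist (u i) x]) ->
  pnk_divides_det u (fun i x => affmx (U0 i) (C i) x).
Proof.
move=> hyp.
pose S := {mpoly R[n]}.
pose Um i : 'M[S]_m := map_mx (fun c => c%:MP) (U0 i)
   + \sum_(j < n) ('X_j : S) *: map_mx (fun c => c%:MP) (C i j).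
pose s i : S := \sum_(j < n) ('X_j - (u i 0 j)%:MP) ^+ 2.
pose Wm i : 'M[S]_2 := mx2 0 (s i) 1 0.
pose Dp := char_poly (- gtsum Um).
pose Pp := char_poly (- gtsum Wm).
have Pmon : Pp \is monic := char_poly_monic _.
pose Qp := rdivp Dp Pp.
pose ev (x : 'rV[R]_n) := meval (fun j : 'I_n => x 0 j).
have evU x i : map_mx (ev x) (Um i) = affmx (U0 i) (C i) x.
  apply/matrixP => a b; rewrite /Um /affmx /ev !mxE !summxE mevalD raddf_sum /=.
  rewrite mevalC; congr (_ + _); apply: eq_bigr => j _.
  by rewrite !mxE mevalM mevalXU mevalC.
have evW x i : map_mx (ev x) (Wm i) = mx2 0 (edist (u i) x ^+ 2) 1 0.
  rewrite /Wm map_mx2 rmorph0 rmorph1 /edist sqr_sqrtr; last first.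
    by apply: sumr_ge0 => j _; apply: sqr_ge0.
  congr mx2; rewrite /s rmorph_sum /=; apply: eq_bigr => j _.
  by rewrite rmorphXn rmorphB /= mevalXU mevalC -sqrrN opprB.
have evD x : map_poly (ev x) Dp = char_poly (- tsum (fun i => affmx (U0 i) (C i) x)).
  rewrite /Dp map_char_poly map_mxN map_gtsum -gtsumE.
  by congr (char_poly (- _)); apply: gtsum_ext => i; rewrite evU.
have evP x : map_poly (ev x) Pp = pnkp (fun i => edist (u i) x).
  rewrite /Pp map_char_poly map_mxN map_gtsum.
  rewrite (gtsum_ext (B := fun i => mx2 0 (edist (u i) x ^+ 2) 1 0)); last first.
    by move=> i; rewrite evW.
  rewrite gtsumE.
  have [lam [Hl Hp]] := trig_tsum (fun i => W_trig (edist (u i) x)).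
  rewrite (trig_char Hl) (Hp (fun v => 'X + v%:P)).
  exact: W_side.
have dvd x : pnkp (fun i => edist (u i) x) %| map_poly (ev x) Dp.
  rewrite evD.
  have [f hf] := fin_all_exists (hyp x).
  have [a ha] := fin_all_exists (fun i => proj2 (hf i)).
  have [b hb] := fin_all_exists (ha).
  have [lam [Hl Hp]] := trig_tsum (fun i => proj1 (hf i)).
  rewrite (trig_char Hl) (Hp (fun v => 'X + v%:P)).
  by apply: (U_side (a := a) (b := b)) => i; case: (hb i).
exists (mpoly_of Pp), (mpoly_of Qp); split.
  by move=> d x; rewrite mpoly_ofE evP pnkpE.
move=> d x; rewrite mevalM !mpoly_ofE.
have -> : \det (d%:M + tsum (fun i => affmx (U0 i) (C i) x))
   = (map_poly (ev x) Dp).[d] by rewrite evD char_poly_eval opprK.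
have E := Pdiv.RingMonic.rdivp_eq Pmon Dp.
have Ex : map_poly (ev x) Dp = map_poly (ev x) Qp * map_poly (ev x) Pp
    + map_poly (ev x) (rmodp Dp Pp).
  by rewrite {1}E rmorphD rmorphM.
rewrite Ex.
suff -> : map_poly (ev x) (rmodp Dp Pp) = 0.
  by rewrite addr0 hornerM mulrC.
apply/eqP; apply: contraT => nz.
have : (size (map_poly (ev x) Pp) <= size (map_poly (ev x) (rmodp Dp Pp)))%N.
  apply: dvdp_leq nz _.
  have : map_poly (ev x) (rmodp Dp Pp) = map_poly (ev x) Dp - map_poly (ev x) Qp * map_poly (ev x) Pp.
    by rewrite Ex addrC addKr.
  move=> ->; rewrite dvdp_sub ?dvdp_mull //.
  by rewrite evP; apply: dvd.
have sz : size (map_poly (ev x) Pp) = size Pp.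
  by apply: size_map_poly_id0; rewrite (monicP Pmon) /ev meval1 oner_neq0.
rewrite sz; move/leq_trans => /(_ _ (size_map_le _ _)).
have := ltn_rmodpN0 Dp (monic_neq0 Pmon).
by move=> h1 h2; move: (leq_trans h1 h2); rewrite ltnn.
Qed.
End Core.

Section F.
Variable R : rcfType.

Lemma diag_eig N (D : 'M[R]_N) (v : 'rV[R]_N) c :
  is_diag_mx D -> v != 0 -> v *m D = c *: v -> exists j, D j j = c.
Proof.
move=> /is_diag_mxP dD nz vD.
have [j vj] : exists j, v 0 j != 0.
  apply/existsP; apply: contraR nz => /existsPn h.
  by apply/eqP/matrixP => i j; rewrite (ord1 i) mxE; apply/eqP/negbNE/h.
exists j; have := congr1 (fun M : 'rV[R]_N => M 0 j) vD; rewrite /= !mxE.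
rewrite (bigD1 j) //= big1 ?addr0 => [|l lj]; last first.
  by rewrite dD ?mulr0 // (inj_eq val_inj) eq_sym.
by rewrite mulrC => /mulIf; apply.
Qed.

Lemma case_ne m (A : 'M[R]_m) (r : R) : 0 < r -> (\rank A <= 2)%N ->
  eigenvalue A r -> eigenvalue A (- r) ->
  (exists f, trig_sim A f /\ exists a b, [/\ a != b, f a = - r & f b = r])
  /\ A *m A *m A = r ^+ 2 *: A.
Proof.
move=> r0 rk er enr.
have rnr : r != - r by apply/eqP => e; lra.
have rn0 : r != 0 by apply/eqP => e; lra.
have nrn0 : - r != 0 by rewrite oppr_eq0.
pose a_ (i : 'I_3) := [:: r; - r; 0]`_i.
have ainj : {in predT &, injective a_}.
  have h1 := negbTE rnr; have h2 := negbTE rn0; have h3 := negbTE nrn0.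
  have h4 : (- r == r) = false by rewrite eq_sym.
  have h5 : (0 == r) = false by rewrite eq_sym.
  have h6 : (0 == - r) = false by rewrite eq_sym.
  move=> [[|[|[|//]]] pi] [[|[|[|//]]] pj] _ _; rewrite /a_ /= => /eqP;
  rewrite ?h1 ?h2 ?h3 ?h4 ?h5 ?h6 // => _; exact: val_inj.
have dir := mxdirect_sum_eigenspace A ainj.
have Esum : (\sum_(i < 3) eigenspace A (a_ i) :=: 1%:M)%MS.
  apply/eqmxP; apply/andP; split; first exact: submx1.
  rewrite sub1mx -col_leq_rank (mxdirectP dir) /= !big_ord_recl big_ord0 /a_ /=.
  have e1 : (0 < \rank (eigenspace A r))%N by rewrite lt0n mxrank_eq0.
  have e2 : (0 < \rank (eigenspace A (- r)))%N by rewrite lt0n mxrank_eq0.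
  have e3 : \rank (eigenspace A 0) = (m - \rank A)%N.
    rewrite /eigenspace.
    have -> : (0 : R)%:M = 0 :> 'M_m by apply/matrixP => i j; rewrite !mxE mul0rn.
    by rewrite subr0 mxrank_ker.
  rewrite e3; lia.
split.
  have : exists2 P : 'M_m, P \in unitmx & similar_diag P A.
    apply/diagonalizablePeigen; exists [:: r; - r; 0].
      by rewrite /= !inE !negb_or rnr rn0 nrn0.
    apply: eqmx_trans Esum; rewrite !big_cons big_nil !big_ord_recl big_ord0.
    exact: eqmx_refl.
  case=> P Pu; rewrite /similar_to conjumx //= => dg.
  exists (fun j => (P *m A *m invmx P) j j); split.
    exists P, (invmx P); split; first exact: mulVmx.
    by split => //; apply: is_diag_mx_is_trig.
  have eig c : eigenvalue A c -> exists j, (P *m A *m invmx P) j j = c.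
    move=> /eigenvalueP [v vA nz]; apply: (diag_eig (v := v *m invmx P)) => //.
      apply: contra nz => /eqP w0; apply/eqP.
      by rewrite -[v]mulmx1 -(mulVmx Pu) mulmxA w0 mul0mx.
    by rewrite !mulmxA mulmxKV // vA scalemxAl.
  have [a ha] := eig _ enr; have [b hb] := eig _ er.
  exists a, b; split => //; apply: contra rnr => /eqP ab.
  by rewrite -{1}hb -ab ha.
pose M := A *m A *m A - r ^+ 2 *: A.
suff : (1%:M <= kermx M)%MS.
  by rewrite sub_kermx mul1mx subr_eq0 => /eqP.
rewrite -Esum; apply/sumsmx_subP => i _.
set E := eigenspace A (a_ i).
have EA : E *m A = a_ i *: E by apply/eigenspaceP.
rewrite sub_kermx /M mulmxBr !mulmxA EA -!scalemxAl EA -scalemxAl EA.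
rewrite -scalemxAr EA !scalerA -scalerBl.
have -> : a_ i * a_ i * a_ i - r ^+ 2 * a_ i = 0.
  by clear E EA; case: i => -[|[|[|//]]] pi; rewrite /a_ /=; ring.
by rewrite scale0r.
Qed.
End F.

Section G.
Variable R : rcfType.

Lemma poly_zero (p : {poly R}) : (forall t, t != 0 -> p.[t] = 0) -> p = 0.
Proof.
move=> h; apply/eqP; apply: contraT => nz.
pose rs := [seq (i.+1)%:R : R | i <- iota 0 (size p)].
have := max_poly_roots nz (rs := rs).
rewrite size_map size_iota ltnn; apply.
  apply/allP => t /mapP [i _ ->]; apply/rootP; apply: h.
  by rewrite pnatr_eq0.
rewrite map_inj_uniq ?iota_uniq // => i j /eqP; rewrite eqr_nat eqSS.
by move/eqP.
Qed.

Lemma MMt0 p q (M : 'M[R]_(p, q)) : M *m M^T = 0 -> M = 0.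
Proof.
move=> h; apply/matrixP => i j; rewrite mxE.
have := congr1 (fun N : 'M[R]_p => N i i) h; rewrite !mxE /= => s0.
have h0 : forall k, 0 <= M i k * M^T k i.
  by move=> k; rewrite mxE -expr2 sqr_ge0.
have := @psumr_eq0P _ _ predT (fun k => M i k * M^T k i) (fun k _ => h0 k) s0 j isT.
by rewrite mxE => /eqP; rewrite mulf_eq0 orbb => /eqP.
Qed.

Lemma sym_cube0 m (B : 'M[R]_m) : B^T = B -> B *m B *m B = 0 -> B = 0.
Proof.
move=> sB c0.
have B2 : B *m B = 0.
  apply: MMt0; rewrite trmx_mul sB mulmxA -(mulmxA (B *m B)) -mulmxA.
  by rewrite !mulmxA c0 mul0mx.
by apply: MMt0; rewrite sB B2.
Qed.

Lemma zero_case n m (u : 'rV[R]_n.+1) (U0 : 'M[R]_m) (C : 'I_n.+1 -> 'M[R]_m) :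
  (forall x, x != u -> affmx U0 C x *m affmx U0 C x *m affmx U0 C x
                       = edist u x ^+ 2 *: affmx U0 C x) ->
  (affmx U0 C u)^T = affmx U0 C u -> affmx U0 C u = 0.
Proof.
move=> hc sym; set B := affmx U0 C u.
pose e0 : 'rV[R]_n.+1 := \row_j (j == ord0)%:R.
have line t : affmx U0 C (u + t *: e0) = B + t *: C ord0.
  rewrite /B /affmx -addrA; congr (_ + _).
  rewrite (eq_bigr (fun j => u 0 j *: C j + (t * (j == ord0)%:R) *: C j)); last first.
    by move=> j _; rewrite !mxE scalerDl.
  rewrite big_split /=; congr (_ + _).
  rewrite (bigD1 ord0) //= mulr1 big1 ?addr0 // => j /negbTE ->.
  by rewrite mulr0 scale0r.
have dist t : edist u (u + t *: e0) ^+ 2 = t ^+ 2.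
  rewrite /edist sqr_sqrtr; last by apply: sumr_ge0 => j _; apply: sqr_ge0.
  rewrite (bigD1 ord0) //= big1 ?addr0 => [|j /negbTE jn]; rewrite !mxE ?eqxx ?jn /=.
    ring.
  ring.
have ne t : t != 0 -> u + t *: e0 != u.
  move=> tn; apply: contra tn => /eqP h.
  have := congr1 (fun M : 'rV[R]_n.+1 => M 0 ord0) h; rewrite !mxE eqxx /= => e.
  apply/eqP; lra.
pose Cm := C ord0.
pose Mt : 'M[{poly R}]_m := map_mx polyC B + 'X *: map_mx polyC Cm.
pose Ft := Mt *m Mt *m Mt - 'X ^+ 2 *: Mt.
have evM t : map_mx (horner_eval t) Mt = B + t *: Cm.
  apply/matrixP => a b; rewrite !mxE /= horner_evalE.
  by rewrite hornerD hornerC hornerM hornerX hornerC.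
have evF t : map_mx (horner_eval t) Ft =
    (B + t *: Cm) *m (B + t *: Cm) *m (B + t *: Cm) - t ^+ 2 *: (B + t *: Cm).
  by rewrite /Ft map_mxB !map_mxM map_mxZ evM rmorphXn /= horner_evalE hornerX.
have F0 : Ft = 0.
  apply/matrixP => a b; rewrite [RHS]mxE; apply: poly_zero => t tn.
  have := congr1 (fun M : 'M[R]_m => M a b) (evF t); rewrite mxE /= horner_evalE => ->.
  by rewrite -line hc ?ne // dist subrr mxE.
have := evF 0; rewrite F0 map_mx0 scale0r addr0 expr0n /= scale0r subr0 => h.
by apply: sym_cube0 => //; rewrite -h.
Qed.
End G.

Section H.
Variable R : rcfType.

Lemma edist_gt0 n (u x : 'rV[R]_n) : x != u -> 0 < edist u x.
Proof.
move=> ne; rewrite /edist sqrtr_gt0 lt0r sumr_ge0 ?andbT; last first.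
  by move=> j _; apply: sqr_ge0.
apply: contra ne => /eqP s0; apply/eqP/matrixP => i j; rewrite (ord1 i).
have := @psumr_eq0P _ _ predT (fun j => (u 0 j - x 0 j) ^+ 2)
  (fun j _ => sqr_ge0 _) s0 j isT.
by move/eqP; rewrite sqrf_eq0 subr_eq0 => /eqP.
Qed.

Lemma edist_self n (u : 'rV[R]_n) : edist u u = 0.
Proof. by rewrite /edist big1 ?sqrtr0 // => j _; rewrite subrr expr0n. Qed.

Lemma part1 (n m k : nat) (u : 'I_k -> 'rV[R]_n)
          (U0 : 'I_k -> 'M[R]_m) (C : 'I_k -> 'I_n -> 'M[R]_m) :
     (1 <= n)%N -> (2 <= m)%N -> (1 <= k)%N ->
     (forall i x, (affmx (U0 i) (C i) x)^T = affmx (U0 i) (C i) x) ->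
     (forall i x, x != u i ->
        [/\ \rank (affmx (U0 i) (C i) x) = 2%N,
            eigenvalue (affmx (U0 i) (C i) x) (edist (u i) x) &
            eigenvalue (affmx (U0 i) (C i) x) (- edist (u i) x)]) ->
     pnk_divides_det u (fun i x => affmx (U0 i) (C i) x).
Proof.
case: n u C => [//|n] u C _; case: m U0 C => [//|[//|m]] U0 C _ _ sym eig.
apply: core => x i.
have cne y : y != u i -> (exists f, trig_sim (affmx (U0 i) (C i) y) f /\
      exists a b, [/\ a != b, f a = - edist (u i) y & f b = edist (u i) y])
  /\ affmx (U0 i) (C i) y *m affmx (U0 i) (C i) y *m affmx (U0 i) (C i) y
     = edist (u i) y ^+ 2 *: affmx (U0 i) (C i) y.
  move=> ny; have [rk e1 e2] := eig i y ny.
  by apply: case_ne (edist_gt0 ny) _ e1 e2; rewrite rk.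
case: (eqVneq x (u i)) => [->|ne]; last exact: (cne x ne).1.
have A0 : affmx (U0 i) (C i) (u i) = 0.
  by apply: zero_case (sym i (u i)) => y ny; exact: (cne y ny).2.
exists (fun _ => 0); split.
  rewrite A0; exists 1%:M, 1%:M; rewrite mul1mx mulmx1 mulmx0; split => //.
  by split; [exact: mx0_is_trig | move=> j; rewrite mxE].
exists ord0, (lift ord0 ord0); split.
- by apply/eqP => /(congr1 val).
- by rewrite edist_self oppr0.
- by rewrite edist_self.
Qed.
End H.

Section I.
Variable R : rcfType.

Definition arrowC n (j : 'I_n) : 'M[R]_n.+1 :=
  \matrix_(a, b) match unlift ord0 a, unlift ord0 b with
                 | None, Some j' => (j' == j)%:R
                 | Some j', None => (j' == j)%:R
                 | _, _ => 0
                 end.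

Lemma sum_delta n (y : 'I_n -> R) (j' : 'I_n) :
  \sum_(j < n) y j * (j' == j)%:R = y j'.
Proof.
rewrite (bigD1 j') //= eqxx mulr1 big1 ?addr0 // => j jn.
by rewrite eq_sym (negbTE jn) mulr0.
Qed.

Lemma arrow_aff n (u x : 'rV[R]_n) :
  arrowmx u x = affmx (arrowmx u 0) (@arrowC n) x.
Proof.
apply/matrixP => a b; rewrite /affmx !mxE summxE.
under eq_bigr do rewrite !mxE.
case: (unlift ord0 a) => [a'|]; case: (unlift ord0 b) => [b'|];
  rewrite ?sum_delta ?big1 ?mxE ?addr0 //; try by move=> j _; rewrite mulr0.
- by rewrite sub0r addrC.
- by rewrite sub0r addrC.
Qed.

Lemma arrow_sym n (u x : 'rV[R]_n) : (arrowmx u x)^T = arrowmx u x.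
Proof.
apply/matrixP => a b; rewrite !mxE.
by case: (unlift ord0 a) => [a'|]; case: (unlift ord0 b) => [b'|].
Qed.

Lemma arrow_self n (u : 'rV[R]_n) : arrowmx u u = 0.
Proof.
apply/matrixP => a b; rewrite !mxE.
by case: (unlift ord0 a) => [a'|]; case: (unlift ord0 b) => [b'|]; rewrite ?subrr.
Qed.

Lemma arrow_rank n (u x : 'rV[R]_n) : (\rank (arrowmx u x) <= 2)%N.
Proof.
pose E0 : 'rV[R]_n.+1 := \row_a (a == ord0)%:R.
pose W : 'rV[R]_n.+1 := \row_a (if unlift ord0 a is Some j then x 0 j - u 0 j else 0).
have -> : arrowmx u x = E0^T *m W + W^T *m E0.
  apply/matrixP => a b; rewrite !mxE !big_ord1 !mxE.
  case: unliftP => [a' ->|->]; case: unliftP => [b' ->|->];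
    rewrite ?liftK ?unlift_none ?eqxx //= ?(negbTE (neq_lift ord0 _)) /=.
  all: try by rewrite ?mul0r ?mulr0 ?mulr1 ?mul1r ?addr0 ?add0r.
apply: leq_trans (mxrank_add _ _) _.
have h1 := leq_trans (mxrankM_maxl E0^T W) (rank_leq_col _).
have h2 := leq_trans (mxrankM_maxl W^T E0) (rank_leq_col _).
exact: leq_add h1 h2.
Qed.

Lemma arrow_eig n (u x : 'rV[R]_n) c : c ^+ 2 = edist u x ^+ 2 ->
  c != 0 -> eigenvalue (arrowmx u x) c.
Proof.
move=> c2 c0; apply/eigenvalueP.
pose v : 'rV[R]_n.+1 := \row_a (if unlift ord0 a is Some j then x 0 j - u 0 j else c).
exists v; last first.
  apply: contra c0 => /eqP v0; have := congr1 (fun M : 'rV[R]_n.+1 => M 0 ord0) v0.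
  by rewrite !mxE unlift_none => ->.
have r2 : \sum_(j < n) (x 0 j - u 0 j) * (x 0 j - u 0 j) = c ^+ 2.
  rewrite c2 /edist sqr_sqrtr; last by apply: sumr_ge0 => j _; apply: sqr_ge0.
  by apply: eq_bigr => j _; rewrite -expr2 -sqrrN opprB.
apply/matrixP => i b; rewrite (ord1 i) !mxE big_ord_recl !mxE unlift_none.
under eq_bigr do rewrite !mxE liftK.
case: unliftP => [b' _|]; rewrite ?liftK ?unlift_none.
  rewrite big1 ?addr0; [ring|] => j _; exact: mulr0.
by move=> _; rewrite mulr0 add0r r2 expr2.
Qed.

End I.

Section J.
Variable R : rcfType.

Lemma part2 (n k : nat) (u : 'I_k -> 'rV[R]_n) :
     (1 <= n)%N -> (1 <= k)%N ->
     pnk_divides_det u (fun i x => arrowmx (u i) x).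
Proof.
case: n u => [//|n] u _ _.
have h := @core R n.+1 n.+2 k u (fun i => arrowmx (u i) 0) (fun i => @arrowC R n.+1).
case: h => [x i|P [Q [hP hQ]]]; last first.
  exists P, Q; split => // d x; rewrite hQ; congr (\det (_ + _)).
  by rewrite -!gtsumE; apply: gtsum_ext => i /=; rewrite -arrow_aff.
rewrite -arrow_aff.
case: (eqVneq x (u i)) => [->|ne].
  rewrite arrow_self; exists (fun _ => 0); split.
    exists 1%:M, 1%:M; rewrite mul1mx mulmx1 mulmx0; split => //.
    by split; [exact: mx0_is_trig | move=> j; rewrite mxE].
  exists ord0, (lift ord0 ord0); split.
  - by apply/eqP => /(congr1 val).
  - by rewrite edist_self oppr0.
  - by rewrite edist_self.
have r0 := edist_gt0 ne.
have rn : edist (u i) x != 0 by rewrite gt_eqF.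
have e1 : eigenvalue (arrowmx (u i) x) (edist (u i) x) by exact: arrow_eig.
have e2 : eigenvalue (arrowmx (u i) x) (- edist (u i) x).
  by apply: arrow_eig; rewrite ?sqrrN // oppr_eq0.
exact: (case_ne r0 (arrow_rank _ _) e1 e2).1.
Qed.

End J.

Theorem mainTheorem9 (R : rcfType) :
  (forall (n m k : nat) (u : 'I_k -> 'rV[R]_n)
          (U0 : 'I_k -> 'M[R]_m) (C : 'I_k -> 'I_n -> 'M[R]_m),
     (1 <= n)%N -> (2 <= m)%N -> (1 <= k)%N ->
     (forall i x, (affmx (U0 i) (C i) x)^T = affmx (U0 i) (C i) x) ->
     (forall i x, x != u i ->
        [/\ \rank (affmx (U0 i) (C i) x) = 2%N,
            eigenvalue (affmx (U0 i) (C i) x) (edist (u i) x) &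
            eigenvalue (affmx (U0 i) (C i) x) (- edist (u i) x)]) ->
     pnk_divides_det u (fun i x => affmx (U0 i) (C i) x))
  /\
  (forall (n k : nat) (u : 'I_k -> 'rV[R]_n),
     (1 <= n)%N -> (1 <= k)%N ->
     pnk_divides_det u (fun i x => arrowmx (u i) x)).
Proof. split; [exact: part1 | exact: part2]. Qed.
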